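(* For every $s\in\{1,\dots,n-1\}$, every $A\in M_{s+1,n-s}(\mathbb R)$ and every $\mathbf w\in\mathcal S_{n+1,n}$, one has $\max_{I\ni0,\,|I|=n}\|\mathbf c^+_{I,\mathbf w}+A\mathbf c^-_{I,\mathbf w}\|\ge1$.
   Context: Sup-norms. Let $\mathbf e_0,\dots,\mathbf e_n$ be the standard basis of $\mathbb R^{n+1}$, $\mathbf e_I=\mathbf e_{i_1}\wedge\dots\wedge\mathbf e_{i_j}$ for $I=\{i_1<\dots<i_j\}\subset\{0,\dots,n\}$, and write $\mathbf w\in\bigwedge^j\mathbb R^{n+1}$ as $\sum_{|I|=j}w_I\mathbf e_I$. $\mathcal S_{n+1,j}$ is the set of elements $\mathbf v_1\wedge\dots\wedge\mathbf v_j$ with $\mathbf v_1,\dots,\mathbf v_j$ a basis of a rank-$j$ subgroup of $\mathbb Z^{n+1}$. For $I\ni0$, $i\notin I$, $l(I,i)$ is the number of elements of $I$ strictly between $0$ and $i$. For $I\ni0$, $|I|=j$: $\mathbf c_{I,\mathbf w}=w_I\mathbf e_0+\sum_{i\in\{1,\dots,n\}\setminus I}(-1)^{l(I,i)}w_{I\cup\{i\}\setminus\{0\}}\mathbf e_i$; $\mathbf c^+_{I,\mathbf w}\in\mathbb R^{s+1}$ is its vector of coordinates $0,\dots,s$ and $\mathbf c^-_{I,\mathbf w}\in\mathbb R^{n-s}$ its vector of coordinates $s+1,\dots,n$. *)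

(* Defs.v *)
From HB Require Import structures.
From mathcomp Require Import all_boot all_order all_algebra.
From mathcomp Require Import reals.
Set Implicit Arguments. Unset Strict Implicit. Unset Printing Implicit Defensive.
Import Order.TTheory GRing.Theory Num.Theory.
Local Open Scope ring_scope.

(* The j x j submatrix of M : 'M_(n+1, j) made of the rows in I
   (in increasing order; enum of a set of ordinals is increasing). *)
Definition row_minor (R : ringType) (n j : nat) (M : 'M[R]_(n.+1, j))
  (I : {set 'I_n.+1}) : 'M[R]_j :=
  \matrix_(a < j, b < j) M (nth ord0 (enum I) a) b.

(* Coordinate w_I of v_1 /\ ... /\ v_j, where v_k is the k-th column of M. *)
Definition wedge_coord (R : comRingType) (n j : nat) (M : 'M[R]_(n.+1, j))
  (I : {set 'I_n.+1}) : R := \det (row_minor M I).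

(* w (given by its coordinates w_I, |I| = j) lies in S_{n+1,j}: it is
   v_1 /\ ... /\ v_j with v_1..v_j in Z^{n+1} a basis of a rank-j subgroup,
   i.e. integer vectors that are linearly independent. *)
Definition in_S (R : realType) (n j : nat) (w : {set 'I_n.+1} -> R) : Prop :=
  exists M : 'M[int]_(n.+1, j),
    \rank (map_mx (fun z : int => z%:~R : R) M)^T = j /\
    forall I : {set 'I_n.+1}, #|I| = j ->
      w I = wedge_coord (map_mx (fun z : int => z%:~R : R) M) I.

Definition lI (n : nat) (I : {set 'I_n.+1}) (i : 'I_n.+1) : nat :=
  #|[set k in I | (0 < val k < val i)%N]|.

Definition cvec (R : realType) (n : nat) (w : {set 'I_n.+1} -> R)
  (I : {set 'I_n.+1}) : 'cV[R]_n.+1 :=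
  \col_(i < n.+1)
    (if val i == 0%N then w I
     else if i \notin I then (-1) ^+ lI I i * w ((I :|: [set i]) :\ ord0)
     else 0).

Definition cplus (R : realType) (n s : nat) (c : 'cV[R]_n.+1) : 'cV[R]_s.+1 :=
  \col_(i < s.+1) c (inord (val i)) ord0.
Definition cminus (R : realType) (n s : nat) (c : 'cV[R]_n.+1) : 'cV[R]_(n - s) :=
  \col_(i < n - s) c (inord (s.+1 + val i)) ord0.

Definition supnorm (R : realType) (m : nat) (x : 'cV[R]_m) : R :=
  \big[Num.max/0]_(i < m) `|x i ord0|.

(* Main.v *)
Require Import Defs.
From HB Require Import structures.
From mathcomp Require Import all_boot all_order all_algebra.
From mathcomp Require Import reals.
Import Order.TTheory GRing.Theory Num.Theory.
Local Open Scope ring_scope.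

Lemma wint (R : realType) n (w : {set 'I_n.+1} -> R) : in_S n w ->
  forall I : {set 'I_n.+1}, #|I| = n -> w I \is a Num.int.
Proof.
case=> M [_ hM] I hI; rewrite hM //= /wedge_coord.
have -> : row_minor (map_mx (fun z : int => z%:~R : R) M) I =
   map_mx ( *~%R (1 : R)) (row_minor M I).
  by apply/matrixP=> a b; rewrite !mxE.
by rewrite det_map_mx; apply: intr_int.
Qed.

Lemma wnz (R : realType) n (w : {set 'I_n.+1} -> R) : in_S n w ->
  exists I : {set 'I_n.+1}, #|I| = n /\ w I != 0.
Proof.
case=> M [hr hM].
set MR := map_mx _ M in hr hM.
have hrk : \rank MR = n by rewrite -mxrank_tr.
pose g := maxrankfun MR.
pose I := [set g x | x : 'I_(\rank MR)].
have cI : #|I| = n by rewrite card_imset ?card_ord //; exact: maxrankfun_inj.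
exists I; split => //; rewrite hM // /wedge_coord.
have hsub : (rowsub g MR <= row_minor MR I)%MS.
  apply/row_subP => i; rewrite row_rowsub.
  have gi : g i \in enum I by rewrite mem_enum; apply: imset_f.
  have hj : (index (g i) (enum I) < n)%N by rewrite -[X in (_ < X)%N]cI cardE index_mem.
  have -> : row (g i) MR = row (Ordinal hj) (row_minor MR I).
    by apply/rowP => b; rewrite !mxE /= nth_index.
  exact: row_sub.
have fr := maxrowsub_free MR.
have : (n <= \rank (row_minor MR I))%N.
  by rewrite -{1}hrk -{1}(eqP fr); exact: mxrankS.
move=> hle.
have : row_free (row_minor MR I).
  by rewrite /row_free eqn_leq rank_leq_row.
by rewrite row_free_unit unitmxE unitfE.
Qed.
From mathcomp Require Import zify.
Import Order.TTheory GRing.Theory Num.Theory.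
Local Open Scope ring_scope.

Lemma bigmax_ge (R : realType) (T : finType) (P : pred T) (F : T -> R) j :
  P j -> F j <= \big[Num.max/0]_(i | P i) F i.
Proof.
move=> Pj; have : j \in index_enum T by rewrite mem_index_enum.
elim: (index_enum T) => [//|a r IH]; rewrite inE big_cons.
case/orP=> [/eqP <-|jr]; first by rewrite Pj le_max lexx.
case: (P a); last exact: IH.
by rewrite le_max IH ?orbT.
Qed.

Lemma J0P n (J : {set 'I_n.+1}) : #|J| = n -> ord0 \notin J -> J = [set~ ord0].
Proof.
move=> cJ nJ; apply/eqP; rewrite eqEcard cardsC1 cJ card_ord /= leqnn andbT.
apply/subsetP => x xJ; rewrite !inE; apply/eqP => e; by rewrite -e xJ in nJ.
Qed.

Lemma UP n (I : {set 'I_n.+1}) i : #|I| = n -> ord0 \in I -> i \notin I ->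
  (I :|: [set i]) :\ ord0 = [set~ ord0].
Proof.
move=> cI h0 hi; apply: J0P; last by rewrite !inE eqxx.
have := cardsD1 ord0 (I :|: [set i]).
rewrite setUC cardsU1 hi cI !inE h0 orbT /= add1n.
by move=> [].
Qed.

Arguments bigmax_ge {R T P F} j.
Arguments J0P {n J}.
Arguments UP {n I i}.
Arguments wint {R n w}.
Arguments wnz {R n w}.

Theorem lemma4p5 (R : realType) (n s : nat) (hs1 : (1 <= s)%N) (hs2 : (s <= n - 1)%N)
  (A : 'M[R]_(s.+1, n - s)) (w : {set 'I_n.+1} -> R) (hw : in_S n w) :
  1 <= \big[Num.max/0]_(I : {set 'I_n.+1} | (ord0 \in I) && (#|I| == n))
         supnorm (cplus s (cvec w I) + A *m cminus s (cvec w I)).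
Proof.
have cJ0 : #|[set~ (ord0 : 'I_n.+1)]| = n by rewrite cardsC1 card_ord.
have ge1 : forall I : {set 'I_n.+1}, #|I| = n -> w I != 0 -> 1 <= `|w I|.
  by move=> I cI; apply: norm_intr_ge1; apply: wint.
have cm0 : forall I : {set 'I_n.+1}, #|I| = n -> ord0 \in I ->
    (forall i : 'I_(n - s), (inord (s.+1 + i) : 'I_n.+1) \notin I -> w [set~ ord0] = 0) ->
    cminus s (cvec w I) = 0.
  move=> I cI h0 hi; apply/colP => i; rewrite !mxE.
  have hv : val (inord (s.+1 + i) : 'I_n.+1) = (s.+1 + i)%N.
    by rewrite /= inordK //; have := ltn_ord i; lia.
  rewrite hv /=; case: ifP => // hn.
  by rewrite (UP cI h0 hn) (hi i hn) mulr0.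
have conc : forall (I : {set 'I_n.+1}) (j : 'I_s.+1), ord0 \in I -> #|I| = n ->
    cminus s (cvec w I) = 0 -> 1 <= `|cvec w I (inord j) ord0| -> 1 <= \big[Num.max/0]_(I : {set 'I_n.+1} | (ord0 \in I) && (#|I| == n))
         supnorm (cplus s (cvec w I) + A *m cminus s (cvec w I)).
  move=> I j h0 cI hm h1; apply: le_trans (bigmax_ge I _); last first.
    by rewrite h0 cI eqxx.
  rewrite /supnorm; apply: le_trans (@bigmax_ge _ _ (fun _ => true) _ j _) => //.
  by rewrite hm mulmx0 addr0 mxE.
have [hz|hnz] := eqVneq (w [set~ ord0]) 0.
- have [I [cI hI]] := wnz hw.
  have h0 : ord0 \in I.
    apply/negPn/negP => hn; move: hI; by rewrite (J0P cI hn) hz eqxx.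
  apply: (conc I ord0 h0 cI); first by apply: cm0 => // i _; exact: hz.
  by rewrite /cvec mxE /= inordK //= ge1.
- pose k : 'I_n.+1 := inord 1.
  have hk : val k = 1%N by rewrite /= inordK //; lia.
  have h0 : ord0 \in [set~ k] by rewrite !inE; apply/eqP => /(congr1 val); rewrite hk.
  have cI : #|[set~ k]| = n by rewrite cardsC1 card_ord.
  apply: (conc _ (inord 1) h0 cI).
    apply/colP => i; rewrite !mxE.
    have hv : val (inord (s.+1 + i) : 'I_n.+1) = (s.+1 + i)%N.
      by rewrite /= inordK //; have := ltn_ord i; lia.
    rewrite hv /= !inE.
    have -> : (inord (s.+1 + i) : 'I_n.+1) != k.
      by apply/eqP => /(congr1 val); rewrite hv hk; lia.
    by [].
  have hj : (inord (val (inord 1 : 'I_s.+1)) : 'I_n.+1) = k.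
    by apply: val_inj; rewrite /= !inordK //; lia.
  have kn : k \notin [set~ k] by rewrite !inE eqxx.
  rewrite hj /cvec mxE hk /= kn (UP cI h0 kn) normrM normrX normrN1 expr1n mul1r.
  exact: ge1.
Qed.
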